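(* Let $k\ge 2$ be a fixed integer and let $c_2,\dots,c_k$ be constants with $0<c_i<\frac{1}{16k^2}\binom{k-1}{i-1}10^{-3\frac{k-i}{k-1}}$. There exist $T_0(k)$ and $N_0(k,T)$ such that for all $T\ge T_0(k)$, $N\ge N_0(k,T)$, and $s=0.001\ln T$, the following holds. Let $\mathcal H=(V,\mathcal E_2\cup\dots\cup\mathcal E_k)$ be a hypergraph on $N$ vertices with average degrees $t_i^{i-1}:=i|\mathcal E_i|/N$ satisfying $t_i^{i-1}\le c_iT^{i-1}(\ln T)^{\frac{k-i}{k-1}}$ for $i=2,\dots,k$. Then there is a set $V^*\subseteq V$ with $|V^*|=n$ such that the induced subhypergraph $\mathcal H^*=\mathcal H[V^*]$ satisfies (a) $\frac34\frac{N}{e^s}\le n\le\frac{N}{e^s}$, and (b) for every $v\in V^*$ and every $i=2,\dots,k$, the number $d_i^*(v)$ of $i$-element edges of $\mathcal H^*$ containing $v$ satisfies $$d_i^*(v)\le\binom{k-1}{i-1}s^{\frac{k-i}{k-1}}\Big(\frac{T}{e^s}\Big)^{i-1}.$$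
   Context: $\mathcal E_i$ denotes the set of edges of size $i$ of a hypergraph; $\mathcal H[V^*]$ is the subhypergraph induced on $V^*$ (all edges contained in $V^*$). *)

(* Defs.v *)
From Stdlib Require Import Reals.
From mathcomp Require Import all_boot.
Set Implicit Arguments. Unset Strict Implicit. Unset Printing Implicit Defensive.

Definition edges_of_size (N : nat) (E : {set {set 'I_N}}) (i : nat)
  : {set {set 'I_N}} := [set e in E | #|e| == i].

Definition induced_edges (N : nat) (E : {set {set 'I_N}}) (Vs : {set 'I_N})
  : {set {set 'I_N}} := [set e in E | e \subset Vs].

Definition deg_i (N : nat) (E : {set {set 'I_N}}) (i : nat) (v : 'I_N) : nat :=
  #|[set e in edges_of_size E i | v \in e]|.

(* Main.v *)
Require Import Defs.
Set Warnings "-notation-overridden,-ambiguous-paths".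
From Stdlib Require Import Reals Lra.
From mathcomp Require Import all_boot all_order all_algebra.
From mathcomp Require Import Rstruct.
From mathcomp Require Import zify.
Import Order.TTheory GRing.Theory Num.Theory.
Section RealPart.
Local Open Scope R_scope.
Lemma key_real (Ei NN nn ii c T Q P C y K : R) (m : nat) :
  0 <= c -> 0 <= Q -> 0 < NN -> 0 <= nn -> 0 <= Ei -> 0 <= ii -> 0 < T -> 0 < P -> 0 < C -> 0 < y ->
  nn / NN <= y / T ->
  ii * Ei / NN <= c * T ^ m * Q ->
  c * Q <= K * C * P ->
  Ei * (ii / (C * P * y ^ m) * nn ^ (S m)) / NN ^ (S m) <= K * nn.
Proof.
move=> hc0 hQ0 hN hn hE hi hT hP hC hy hx hH hc.
set x := nn / NN.
have hx0 : 0 <= x by apply: Rmult_le_pos => //; apply: Rlt_le; apply: Rinv_0_lt_compat.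
have hym : 0 < y ^ m by apply: pow_lt.
have hD : 0 < C * P * y ^ m by apply: Rmult_lt_0_compat => //; apply: Rmult_lt_0_compat.
have e1 : Ei * (ii / (C * P * y ^ m) * nn ^ (S m)) / NN ^ (S m)
        = (ii * Ei / NN) * (nn * x ^ m / (C * P * y ^ m)).
  rewrite /x Rpow_mult_distr pow_inv /=. field; repeat split; try lra.
  all: try (apply: pow_nonzero; lra).

rewrite e1.
have hpos : 0 <= nn * x ^ m / (C * P * y ^ m).
  apply: Rmult_le_pos; last by apply: Rlt_le; apply: Rinv_0_lt_compat.
  by apply: Rmult_le_pos => //; apply: pow_le.
apply: Rle_trans; first by apply: Rmult_le_compat_r; [exact: hpos | exact: hH].
have hTx : T * x <= y.
  have : x <= y / T by [].
  move=> h; have := Rmult_le_compat_l T _ _ (Rlt_le _ _ hT) h.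
  by have -> : T * (y / T) = y by field; lra.
have hpw : (T * x) ^ m <= y ^ m.
  apply: pow_incr; split => //; apply: Rmult_le_pos => //; lra.
have e2 : c * T ^ m * Q * (nn * x ^ m / (C * P * y ^ m))
        = (c * Q) * nn * (T * x) ^ m / (C * P * y ^ m).
  rewrite Rpow_mult_distr; field; repeat split; try lra.
rewrite e2.
have hcq : 0 <= c * Q by apply: Rmult_le_pos.
have h3 : c * Q * nn * (T * x) ^ m / (C * P * y ^ m) <= c * Q * nn * y ^ m / (C * P * y ^ m).
  apply: Rmult_le_compat_r; first by apply: Rlt_le; apply: Rinv_0_lt_compat.
  apply: Rmult_le_compat_l; first by apply: Rmult_le_pos.
  exact: hpw.
apply: (Rle_trans _ _ _ h3).
have -> : c * Q * nn * y ^ m / (C * P * y ^ m) = (c * Q) * nn / (C * P).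
  field; repeat split; try lra.
have hCP : 0 < C * P by apply: Rmult_lt_0_compat.
apply: (Rmult_le_reg_r (C * P)) => //.
have -> : c * Q * nn / (C * P) * (C * P) = (c * Q) * nn by field; lra.
have : (c * Q) * nn <= (K * C * P) * nn by apply: Rmult_le_compat_r.
lra.
Qed.

Lemma Rpower_pos' x y : 0 < Rpower x y.
Proof. rewrite /Rpower; exact: exp_pos. Qed.

Lemma cq_bound (c C a b s K : R) :
  0 < s -> 0 <= c -> 0 <= K -> 0 <= C ->
  c < K * C * Rpower 10 (- (3 * a / b)) ->
  c * Rpower (1000 * s) (a / b) <= K * C * Rpower s (a / b).
Proof.
move=> hs hc hK hC h.
have e1 : Rpower (1000 * s) (a / b) = Rpower 1000 (a / b) * Rpower s (a / b).
  rewrite Rpower_mult_distr //; lra.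
have e2 : Rpower 10 (- (3 * a / b)) * Rpower 1000 (a / b) = 1.
  have -> : (1000 : R) = Rpower 10 (INR 3).
    rewrite Rpower_pow; [simpl; lra | lra].
  rewrite Rpower_mult -Rpower_plus.
  have -> : - (3 * a / b) + INR 3 * (a / b) = 0 by simpl; unfold Rdiv; ring.
  apply: Rpower_O; lra.
rewrite e1.
have hP := Rpower_pos' s (a / b).
have hR := Rpower_pos' 1000 (a / b).
have : c * Rpower 1000 (a / b) <= K * C * Rpower 10 (- (3 * a / b)) * Rpower 1000 (a / b).
  apply: Rmult_le_compat_r; lra.
rewrite Rmult_assoc e2 Rmult_1_r => h2.
rewrite -Rmult_assoc.
apply: Rmult_le_compat_r; lra.
Qed.

End RealPart.

Section RingPart.
Local Open Scope ring_scope.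

Lemma nat_bern (M j : nat) : (1 <= M)%N -> ((M - j) * M ^ j <= M * (M - 1) ^ j)%N.
Proof.
move=> HM; elim: j => [|j IH]; first by rewrite !expn0 subn0.
case: (ltnP j M) => hj; last first.
  by have -> : (M - j.+1 = 0)%N by lia.
rewrite !expnS.
have h1 : ((M - j.+1) * M <= (M - 1) * (M - j))%N by nia.
apply: (@leq_trans ((M - 1) * ((M - j) * M ^ j))).
  rewrite mulnA (mulnA (M - 1)%N); apply: leq_mul => //.
by rewrite (mulnCA M); apply: leq_mul.
Qed.

Section Comb.
Variables (N : nat) (E : {set {set 'I_N}}) (w : nat -> R).
Hypothesis w0 : forall j, 0 <= w j.


Definition G (S : {set 'I_N}) : R :=
  \sum_(e in E | e \subset S) w #|e| / (#|S|%:R ^+ #|e|).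

Lemma G_step (S : {set 'I_N}) (m : nat) : #|S| = m.+1 -> (1 <= m)%N ->
  exists v, v \in S /\ G (S :\ v) <= G S.
Proof.
move=> hS hm.
have hsum : \sum_(v in S) G (S :\ v) <= (m.+1)%:R * G S.
  rewrite /G.
  have hc : forall v, v \in S -> #|S :\ v| = m.
    by move=> v vS; move: hS; rewrite (cardsD1 v S) vS add1n => -[].
  rewrite (eq_bigr (fun v => \sum_(e in E | e \subset S :\ v) w #|e| / (m%:R ^+ #|e|))); last first.
    by move=> v vS; rewrite hc.
  rewrite (exchange_big_dep (fun e : {set 'I_N} => (e \in E) && (e \subset S))) /=; last first.
    move=> v e _ /andP[-> /subset_trans]; apply; apply: subD1set.
  rewrite big_distrr /=.
  apply: ler_sum => e /andP[eE eS].
  rewrite (eq_bigl (fun v => v \in S :\: e)); last first.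
    move=> v; rewrite eE /= in_setD.
    apply/idP/idP.
      move=> /andP[vS esub]; rewrite vS andbT; apply/negP => ve.
      by have := subsetP esub v ve; rewrite in_setD1 eqxx.
    move=> /andP[ve vS]; rewrite vS /=; apply/subsetP => x xe.
    rewrite in_setD1 (subsetP eS x xe) andbT; apply/negP => /eqP ex.
    by move: ve; rewrite -ex xe.
  rewrite sumr_const cardsDS // hS.
  set j := #|e|.
  have hb := nat_bern (m.+1) j isT.
  have hmpos : 0 < m%:R :> R by rewrite ltr0n.
  have hMpos : 0 < (m.+1)%:R :> R by rewrite ltr0n.
  have hb' : ((m.+1 - j)%:R * (m.+1)%:R ^+ j <= (m.+1)%:R * m%:R ^+ j :> R).
    by rewrite -!natrX -!natrM ler_nat; move: hb; rewrite subn1.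
  have ha : 0 < m%:R ^+ j :> R by rewrite exprn_gt0.
  have hb2 : 0 < (m.+1)%:R ^+ j :> R by rewrite exprn_gt0.
  have key : (m.+1 - j)%:R / m%:R ^+ j <= (m.+1)%:R / (m.+1)%:R ^+ j :> R.
    rewrite ler_pdivrMr // mulrAC ler_pdivlMr //.
  have -> : forall x : R, x *+ (m.+1 - j) = (m.+1-j)%:R * x by move=> x; rewrite mulr_natl.
  have -> : (m.+1 - j)%:R * (w j / m%:R ^+ j) = w j * ((m.+1 - j)%:R / m%:R ^+ j) by rewrite mulrCA.
  have -> : (m.+1)%:R * (w j / (m.+1)%:R ^+ j) = w j * ((m.+1)%:R / (m.+1)%:R ^+ j) by rewrite mulrCA.
  by apply: ler_wpM2l.
case: (boolP [exists v in S, G (S :\ v) <= G S]).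
  by move=> /existsP[v /andP[vS hv]]; exists v.
move=> /existsPn hn; exfalso.
have hlt : \sum_(v in S) G S < \sum_(v in S) G (S :\ v).
  apply: ltr_sum.
    apply/hasP; have : (0 < #|S|)%N by rewrite hS.
    by move=> /card_gt0P[x xS]; exists x; rewrite ?mem_index_enum.
  move=> v vS; have := hn v; rewrite vS /=.
  by rewrite -ltNge.
move: hlt; rewrite sumr_const hS -mulr_natl => hlt.
by move: (lt_le_trans hlt hsum); rewrite ltxx.
Qed.
Lemma G_exists (n : nat) : (1 <= n)%N -> (n <= N)%N ->
  exists S : {set 'I_N}, #|S| = n /\ G S <= G setT.
Proof.
move=> hn hnN.
suff H : forall d, (d <= N - n)%N -> exists S : {set 'I_N}, #|S| = (N - d)%N /\ G S <= G setT.
  have [S [h1 h2]] := H (N - n)%N (leqnn _); exists S; split => //.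
  by rewrite h1; lia.
elim => [|d IH] hd.
  by exists setT; rewrite subn0 cardsT card_ord; split.
have [S [h1 h2]] := IH (ltnW hd).
have hS : #|S| = (N - d.+1).+1 by rewrite h1; lia.
have [v [vS hv]] := @G_step S _ hS ltac:(lia).
exists (S :\ v); split.
  by move: hS; rewrite (cardsD1 v S) vS add1n => -[].
exact: le_trans hv h2.
Qed.
End Comb.
Arguments G {N}.
Arguments G_exists {N}.

Section Hyp.
Variables (k N : nat) (E : {set {set 'I_N}}) (D : nat -> R).
Hypothesis Dpos : forall j, 0 < D j.

Definition f (j : nat) : R := if (2 <= j <= k)%N then (D j)^-1 else 0.
Lemma f_ge0 j : 0 <= f j.
Proof. by rewrite /f; case: ifP => // _; rewrite invr_ge0 ltW. Qed.

Definition Phi (S : {set 'I_N}) (v : 'I_N) : R :=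
  \sum_(e in E | (e \subset S) && (v \in e)) f #|e|.

Lemma Phi_ge0 S v : 0 <= Phi S v.
Proof. by apply: sumr_ge0 => e _; apply: f_ge0. Qed.

Lemma L1 S v i : (2 <= i <= k)%N ->
  (deg_i (induced_edges E S) i v)%:R * (D i)^-1 <= Phi S v.
Proof.
move=> hi.
rewrite /Phi (bigID (fun e : {set 'I_N} => #|e| == i)) /=.
rewrite -[X in X <= _]addr0; apply: lerD; last first.
  by apply: sumr_ge0 => e _; apply: f_ge0.
rewrite /deg_i mulr_natl -sumr_const.
apply: le_trans (_ : \sum_(e in [set e in edges_of_size (induced_edges E S) i | v \in e]) f #|e| <= _).
  apply: ler_sum => e; rewrite !inE => /andP[/andP[/andP[_ _] /eqP he] _].
  by rewrite /f he hi.
rewrite [X in _ <= X](eq_bigl (fun e => e \in [set e0 in edges_of_size (induced_edges E S) i | v \in e0])) //.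
move=> e; rewrite !inE.
by apply/idP/idP => [/andP[/and3P[h1 h2 h3] h4]|/andP[/andP[/andP[h1 h2] h4] h3]]; rewrite ?h1 ?h2 ?h3 ?h4.
Qed.

Definition Vs (S : {set 'I_N}) := [set v in S | Phi S v < 1].

Lemma L2 S : #|S :\: Vs S|%:R <= \sum_(v in S) Phi S v.
Proof.
rewrite (big_setID (Vs S)) /=.
rewrite -[X in X <= _]add0r; apply: lerD.
  by apply: sumr_ge0 => v _; apply: Phi_ge0.
rewrite -sum1_card natr_sum.
apply: ler_sum => v; rewrite !inE => /andP[hv vS].
by move: hv; rewrite vS /= -leNgt.
Qed.

Lemma L3 (S : {set 'I_N}) : \sum_(v in S) Phi S v = \sum_(e in E | e \subset S) f #|e| *+ #|e|.
Proof.
rewrite /Phi (exchange_big_dep (fun e : {set 'I_N} => (e \in E) && (e \subset S))) /=; last first.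
  by move=> v e _ /andP[-> /andP[-> _]].
apply: eq_bigr => e /andP[eE eS].
rewrite (eq_bigl (fun v => v \in e)); last first.
  move=> v; rewrite eE eS /=; apply/idP/idP; first by case/andP.
  by move=> ve; rewrite (subsetP eS v ve).
by rewrite sumr_const.
Qed.

Variable n : nat.
Definition w (j : nat) : R := if (2 <= j <= k)%N then j%:R / D j * n%:R ^+ j else 0.

Lemma w_ge0 j : 0 <= w j.
Proof.
rewrite /w; case: ifP => // _; apply: mulr_ge0; last by apply: exprn_ge0.
by apply: divr_ge0 => //; apply: ltW.
Qed.

Lemma L4 (S : {set 'I_N}) : #|S| = n -> (0 < n)%N ->
  G E w S = \sum_(e in E | e \subset S) f #|e| *+ #|e|.
Proof.
move=> hS hn; rewrite /G; apply: eq_bigr => e _.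
rewrite hS /w /f; case: ifP => _; last by rewrite mul0r mul0rn.
have hnz : n%:R ^+ #|e| != 0 :> R by rewrite expf_neq0 // pnatr_eq0 -lt0n.
have hD : D #|e| != 0 by rewrite gt_eqF // Dpos.
rewrite mulfK //.
by rewrite mulr_natl.
Qed.

Lemma L5 : (forall e, e \in E -> (#|e| <= k)%N) ->
  G E w setT = \sum_(i < k.+1) (w i / N%:R ^+ i) *+ #|edges_of_size E i|.
Proof.
move=> hE; rewrite /G cardsT card_ord.
rewrite (eq_bigl (fun e => e \in E)); last by move=> e; rewrite subsetT andbT.
rewrite (eq_bigr (fun e : {set 'I_N} => \sum_(j < k.+1 | j == #|e| :> nat) (w j / N%:R ^+ j))); last first.
  by move=> e eE; rewrite (big_ord1_eq _ (fun j => w j / N%:R ^+ j)) ltnS hE.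
rewrite (exchange_big_dep xpredT) //=.
apply: eq_bigr => j _.
rewrite -sumr_const; apply: eq_bigl => e.
by rewrite /edges_of_size !inE eq_sym.
Qed.

Lemma bad_bound (S : {set 'I_N}) (B : R) : #|S| = n -> (0 < n)%N ->
  G E w S <= G E w setT -> (forall e, e \in E -> (#|e| <= k)%N) ->
  (forall i : 'I_k.+1, (w i / N%:R ^+ i) *+ #|edges_of_size E i| <= B) ->
  #|S :\: Vs S|%:R <= B *+ k.+1.
Proof.
move=> hS hn hG hE hB.
apply: le_trans (L2 S) _.
rewrite L3 -L4 //.
apply: le_trans hG _.
rewrite L5 //.
apply: le_trans (ler_sum _ (fun i _ => hB i)) _.
by rewrite sumr_const card_ord.
Qed.

Lemma deg_mono (S V : {set 'I_N}) i v : V \subset S ->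
  (deg_i (induced_edges E V) i v <= deg_i (induced_edges E S) i v)%N.
Proof.
move=> hVS; apply: subset_leq_card; apply/subsetP => e.
rewrite /edges_of_size /induced_edges !inE.
move=> /andP[/andP[/andP[-> eV] ->] ->]; rewrite andbT /=.
by rewrite (subset_trans eV hVS).
Qed.

End Hyp.

End RingPart.
Open Scope R_scope.

Theorem mainTheorem3 :
  forall (k : nat), (2 <= k)%N ->
  forall (c : nat -> R),
  (forall i : nat, (2 <= i <= k)%N ->
     0 < c i /\
     c i < / (16 * INR k ^ 2) * INR 'C(k - 1, i - 1)
             * Rpower 10 (- (3 * INR (k - i) / INR (k - 1)))) ->
  exists T0 : R, forall T : R, T >= T0 ->
  exists N0 : nat, forall N : nat, (N0 <= N)%N ->
  let s := ln T / 1000 in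
  forall E : {set {set 'I_N}},
  (forall e, e \in E -> (2 <= #|e| <= k)%N) ->
  (forall i : nat, (2 <= i <= k)%N ->
     INR i * INR #|edges_of_size E i| / INR N
       <= c i * T ^ (i - 1) * Rpower (ln T) (INR (k - i) / INR (k - 1))) ->
  exists Vs : {set 'I_N},
    (3 / 4 * (INR N / exp s) <= INR #|Vs| <= INR N / exp s) /\
    (forall v : 'I_N, v \in Vs ->
     forall i : nat, (2 <= i <= k)%N ->
       INR (deg_i (induced_edges E Vs) i v)
         <= INR 'C(k - 1, i - 1) * Rpower s (INR (k - i) / INR (k - 1))
            * (T / exp s) ^ (i - 1)).
Proof.
move=> k hk c hc.
exists 2 => T hT.
have hT1 : 1 < T by lra.
have hlnT : 0 < ln T by rewrite -ln_1; apply: ln_increasing; lra.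
have hs0 : 0 < ln T / 1000 by apply: Rdiv_lt_0_compat; lra.
have hes1 : 1 <= exp (ln T / 1000).
  have := exp_ineq1_le (ln T / 1000); lra.
pose a := 5 * exp (ln T / 1000).
exists (Num.truncn a).+1 => N hN s E hE hEi.
have hes : 0 < exp s by apply: exp_pos.
have hN5 : 5 * exp s < INR N.
  have h1 : a < INR (Num.truncn a).+1.
    rewrite INRE; apply/RltP; exact: truncnS_gt.
  have h2 := le_INR _ _ (elimT ssrnat.leP hN).
  rewrite /a in h1 h2; rewrite /s; lra.
have hNpos : 0 < INR N by lra.
set x := INR N / exp s.
have hx5 : 5 < x.
  rewrite /x; apply: (Rmult_lt_reg_r (exp s)) => //.
  have -> : INR N / exp s * exp s = INR N by field; lra.
  lra.
have hx0 : 0 < x by rewrite /x; apply: Rdiv_lt_0_compat.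
set n := Num.truncn x.
have hnle : INR n <= x.
  rewrite INRE; apply/RleP; rewrite truncn_le; apply/RleP; exact: (Rlt_le _ _ hx0).
have hngt : x < INR n + 1.
  have := truncnS_gt x; rewrite -/n => /RltP; rewrite -addn1 natrD -INRE.
  by rewrite RplusE.
have hn4 : (4 <= n)%N.
  have : 4 < INR n by lra.
  move=> h; apply/ssrnat.leP; apply: INR_le; simpl; lra.
have hxN : x <= INR N.
  rewrite /x; apply: (Rmult_le_reg_r (exp s)) => //.
  have -> : INR N / exp s * exp s = INR N by field; lra.
  have : 1 <= exp s by rewrite /s.
  nra.
have hnN : (n <= N)%N.
  have : INR n <= INR N by lra.
  by move=> h; apply/ssrnat.leP; apply: INR_le.
pose D := fun j => if (2 <= j <= k)%N then
   INR 'C(k - 1, j - 1) * Rpower s (INR (k - j) / INR (k - 1)) * (T / exp s) ^ (j - 1)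
   else 1.
have hy : 0 < T / exp s by apply: Rdiv_lt_0_compat; lra.
have hCpos : forall j, (2 <= j <= k)%N -> 0 < INR 'C(k - 1, j - 1).
  move=> j /andP[h1 h2]; apply: lt_0_INR; apply/ssrnat.ltP; rewrite bin_gt0; lia.
have DposR : forall j, 0 < D j.
  move=> j; rewrite /D; case: ifP => hj; last lra.
  apply: Rmult_lt_0_compat; last by apply: pow_lt.
  apply: Rmult_lt_0_compat; first by apply: hCpos.
  exact: Rpower_pos'.
have Dpos : forall j, (0 < D j)%O := fun j => introT RltP (DposR j).
have hn1 : (0 < n)%N by lia.
have [S [hSn hGS]] := @G_exists N E (w k D n) (@w_ge0 k D Dpos n) n hn1 hnN.
have hEk : forall e, e \in E -> (#|e| <= k)%N by move=> e /hE /andP[].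
pose K := / (16 * INR k ^ 2).
have hk2 : 2 <= INR k by apply: (le_INR 2); apply/ssrnat.leP.
have hK : 0 < K by rewrite /K; apply: Rinv_0_lt_compat; nra.
have hL : ln T = 1000 * s by rewrite /s; field.
have hbad : INR #|S :\: Vs k N E D S| <= INR k.+1 * (K * INR n).
  rewrite !INRE !RmultE; apply/RleP; rewrite mulr_natl.
  apply: (@bad_bound k N E D Dpos n S) => // i.
  case hi: (2 <= i <= k)%N; last first.
    rewrite /w hi mul0r mul0rn; apply/RleP; rewrite -INRE.
    apply: Rmult_le_pos; [lra | apply: pos_INR].
  rewrite /w hi -mulr_natl mulrA -!INRE -!RpowE; apply/RleP.
  have [m hm] : exists m, nat_of_ord i = m.+1.
    by case/andP: hi; case: (nat_of_ord i) => [|m] //; exists m.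
  rewrite hm; rewrite hm in hi.
  have e1 : (m.+1 - 1 = m)%N by lia.
  rewrite /D hi e1.
  have hH := hEi _ hi; rewrite e1 in hH.
  have [hc0 hc1] := hc _ hi; rewrite e1 in hc1.
  have hCm := hCpos _ hi; rewrite e1 in hCm.
  apply: (@key_real _ _ _ _ (c m.+1) T (Rpower (ln T) (INR (k - m.+1) / INR (k - 1)))).
  - lra.
  - exact: Rlt_le (Rpower_pos' _ _).
  - exact: hNpos.
  - exact: pos_INR.
  - exact: pos_INR.
  - exact: pos_INR.
  - lra.
  - exact: Rpower_pos'.
  - exact: hCm.
  - exact: hy.
  - have h1 : INR n / INR N <= x / INR N.
      by apply: Rmult_le_compat_r => //; apply: Rlt_le; apply: Rinv_0_lt_compat.
    have -> : T / exp s / T = x / INR N by rewrite /x; field; lra.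
    exact: h1.
  - exact: hH.
  - rewrite hL; apply: cq_bound => //; try lra.
pose V := Vs k N E D S.
have hVS : V \subset S by apply/subsetP => v; rewrite /V /Vs inE => /andP[].
have hcard : (#|V| + #|S :\: V| = n)%N.
  by rewrite -hSn -(cardsID V S) (setIidPr hVS).
have hcardR : INR #|V| + INR #|S :\: V| = INR n by rewrite -plus_INR; congr INR.
have hkK : INR k.+1 * K <= 3 / 64.
  rewrite S_INR /K.
  apply: (Rmult_le_reg_r (16 * INR k ^ 2)); first by nra.
  have -> : (INR k + 1) * / (16 * INR k ^ 2) * (16 * INR k ^ 2) = INR k + 1.
    field; nra.
  nra.
have hnR : 4 <= INR n by have := le_INR 4 n (elimT ssrnat.leP hn4); simpl; lra.
have hbad2 : INR #|S :\: V| <= 3 / 64 * INR n.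
  have : INR k.+1 * (K * INR n) <= 3 / 64 * INR n.
    rewrite -Rmult_assoc; apply: Rmult_le_compat_r => //; lra.
  rewrite /V in hcardR *; lra.
exists V; split.
  have := pos_INR #|S :\: V|.
  split; lra.
move=> v vV i hi.
have vS : v \in S by apply: (subsetP hVS).
have hphi : (Phi k N E D S v < 1)%O by move: vV; rewrite /V /Vs inE => /andP[].
have h1 := @L1 k N E D Dpos S v i hi.
have h2 := @deg_mono N E S V i v hVS.
have h4 := le_lt_trans h1 hphi.
rewrite -INRE in h4; move/RltP: h4 => h4.
have hD := DposR i.
have h3 : INR (deg_i (induced_edges E S) i v) < D i.
  have e : INR (deg_i (induced_edges E S) i v)
         = INR (deg_i (induced_edges E S) i v) * / D i * D i by field; lra.
  rewrite e; have : INR (deg_i (induced_edges E S) i v) * / D i * D i < 1 * D i.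
    by apply: Rmult_lt_compat_r.
  lra.
have h5 := le_INR _ _ (elimT ssrnat.leP h2).
have -> : INR 'C(k - 1, i - 1) * Rpower s (INR (k - i) / INR (k - 1)) * (T / exp s) ^ (i - 1) = D i.
  by rewrite /D hi.
lra.
Qed.
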